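(* Let $n\ge1$, let $\varrho:[0,1]\to[0,\infty)$ be integrable with $\int_0^1\varrho(x)\,dx=1$, and let the angles $\theta_w$ and $\theta=\theta_\emptyset$ be as defined in the context. Define $\mathsf{U}_1:=\mathsf{I}_{2^{n-1}}\otimes\mathsf{R}(\theta)$ and, for $2\le j\le n$, \[ \mathsf{U}_j:=\prod_{w\in\{0,1\}^{j-1}}\Bigl(\mathsf{I}_{2^{n-j}}\otimes \mathsf{CC}^{(1)}_w\bigl(\mathsf{R}(\theta_w)\bigr)\Bigr), \] and let $|\psi_j\rangle:=\mathsf{U}_j\mathsf{U}_{j-1}\cdots\mathsf{U}_1|0\rangle^{\otimes n}$. Then for every $1\le j\le n$, \[ |\psi_j\rangle=|0\rangle^{\otimes(n-j)}\otimes\sum_{w=z_{n-j+1}\cdots z_n\in\{0,1\}^j}\Bigl(\mathsf{T}_{z_{n-j+1}}(\theta_{z_{n-j+2}\cdots z_n})\cdots\mathsf{T}_{z_{n-1}}(\theta_{z_n})\,\mathsf{T}_{z_n}(\theta)\Bigr)|w\rangle . \] In particular, $|\psi_n\rangle=\sum_{z_1\cdots z_n\in\{0,1\}^n}\bigl(\mathsf{T}_{z_1}(\theta_{z_2\cdots z_n})\cdots\mathsf{T}_{z_n}(\theta)\bigr)|z_1\cdots z_n\rangle$.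
   Context: The $n$-qubit space is $(\mathbb{C}^2)^{\otimes n}$ with basis $|z_1\cdots z_n\rangle=|z_1\rangle\otimes\cdots\otimes|z_n\rangle$ (qubit $1$ leftmost). $\mathsf{R}(\alpha)=\begin{pmatrix}\cos\alpha&-\sin\alpha\\ \sin\alpha&\cos\alpha\end{pmatrix}$, and $\mathsf{I}_d$ is the $d\times d$ identity. For $w\in\{0,1\}^{j-1}$, $\mathsf{CC}^{(1)}_w(U)\in\mathrm{U}(2^j)$ is the unitary on $j$ qubits that applies the one-qubit unitary $U$ to the first of these $j$ qubits if the remaining $j-1$ qubits are in the basis state $|w\rangle$, and acts as the identity on all other computational basis states; thus $\mathsf{I}_{2^{n-j}}\otimes\mathsf{CC}^{(1)}_w(U)$ acts on qubit $n-j+1$ controlled by qubits $n-j+2,\dots,n$. For a word $w=z_1\cdots z_m\in\{0,1\}^m$ ($m\ge0$) let $k(w)=\sum_{r=1}^m z_r2^{r-1}$, $I_w=[k(w)/2^m,(k(w)+1)/2^m]$, $p_w=\int_{I_w}\varrho(x)\,dx$; $0w,1w$ denote prepending a bit. For words $w$ of length $0\le m\le n-1$, $\theta_w\in[0,\pi/2]$ is defined by $\cos^2\theta_w=p_{0w}/p_w$, $\sin^2\theta_w=p_{1w}/p_w$ if $p_w>0$, and $\theta_w:=0$ if $p_w=0$; $\theta:=\theta_\emptyset$. For $z\in\{0,1\}$, $\mathsf{T}_z(x):=(\cos x)^{1-z}(\sin x)^z$. *)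

(* Defs.v *)
From HB Require Import structures.
From mathcomp Require Import all_boot all_order all_algebra.
From mathcomp.real_closed Require Import complex mxtens.
From mathcomp Require Import all_classical all_reals all_analysis.

Set Implicit Arguments.
Unset Strict Implicit.
Unset Printing Implicit Defensive.

Import Order.TTheory GRing.Theory Num.Theory.
Local Open Scope ring_scope.

Section QState.
Variable R : realType.
Local Notation C := (R[i]).

(* one-qubit basis vector |b>, b = false ~ |0>, b = true ~ |1> *)
Definition qb (b : bool) : 'cV[C]_2 := \col_(i < 2) ((i == b :> nat)%:R).

(* |z_1 ... z_j> = |z_1> (x) ... (x) |z_j>  (qubit 1 leftmost) *)
Fixpoint ket (j : nat) : j.-tuple bool -> 'cV[C]_(2 ^ j) :=
  match j with
  | 0 => fun _ => const_mx 1
  | m.+1 => fun w =>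
      castmx (esym (expnS 2 m), muln1 1) (qb (thead w) *t ket (behead_tuple w))
  end.

Definition ket0s (j : nat) : 'cV[C]_(2 ^ j) := ket (nseq_tuple j false).

Definition Rot (a : R) : 'M[C]_2 :=
  \matrix_(i < 2, k < 2)
    (if (i : nat) == k then (cos a)%:C%C
     else if (i : nat) == 0%N then (- sin a)%:C%C else (sin a)%:C%C).

Definition proj (m : nat) (w : m.-tuple bool) : 'M[C]_(2 ^ m) :=
  ket w *m (ket w)^T.

(* CC^{(1)}_w(U) on m+1 qubits: U on the first qubit when the remaining m
   qubits are in |w>, identity otherwise:  U (x) |w><w| + I_2 (x) (I - |w><w|) *)
Definition CC (m : nat) (w : m.-tuple bool) (U : 'M[C]_2) : 'M[C]_(2 ^ m.+1) :=
  castmx (esym (expnS 2 m), esym (expnS 2 m))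
    (U *t proj w + (1%:M : 'M[C]_2) *t (1%:M - proj w)).

(* I_{2^{n-j}} (x) A, as a 2^n x 2^n matrix (meaningful for j <= n) *)
Definition embed (n j : nat) (A : 'M[C]_(2 ^ j)) : 'M[C]_(2 ^ n) :=
  conform_mx 1%:M ((1%:M : 'M[C]_(2 ^ (n - j))) *t A).

End QState.
Arguments embed {R} n j A.

Section Angles.
Variable R : realType.
Local Notation C := (R[i]).

(* k(w) = sum_r z_r 2^(r-1)  (first letter least significant) *)
Definition kw (w : seq bool) : nat := \sum_(r < size w) (nth false w r) * 2 ^ r.

Definition pw (rho : R -> R) (w : seq bool) : R :=
  fine (\int[@lebesgue_measure R]_(x in
          `[((kw w)%:R / 2 ^+ size w)%R, ((kw w).+1%:R / 2 ^+ size w)%R]%classic)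
          (rho x)%:E)%E.

(* theta_w in [0, pi/2] with cos^2 = p_{0w}/p_w, sin^2 = p_{1w}/p_w if p_w > 0,
   theta_w = 0 if p_w = 0 *)
Definition theta (rho : R -> R) (w : seq bool) : R :=
  if 0 < pw rho w then acos (Num.sqrt (pw rho (false :: w) / pw rho w)) else 0.

Definition Tz (z : bool) (x : R) : R := cos x ^+ (1 - z) * sin x ^+ z.

Definition Ugate (rho : R -> R) (n j : nat) : 'M[C]_(2 ^ n) :=
  match j with
  | 0 => 1%:M
  | 1 => embed n 1 (Rot (theta rho [::]))
  | m.+2 => \prod_(w : m.+1.-tuple bool) embed n m.+2 (CC w (Rot (theta rho w)))
  end.

Fixpoint psi (rho : R -> R) (n j : nat) : 'cV[C]_(2 ^ n) :=
  match j with
  | 0 => ket0s R n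
  | m.+1 => Ugate rho n m.+1 *m psi rho n m
  end.

Definition amp (rho : R -> R) (j : nat) (w : j.-tuple bool) : C :=
  \prod_(i < j) (Tz (tnth w i) (theta rho (drop i.+1 w)))%:C%C.

End Angles.

(* Main.v *)
Require Import Defs.
From HB Require Import structures.
From mathcomp Require Import all_boot all_order all_algebra.
From mathcomp.real_closed Require Import complex mxtens.
From mathcomp Require Import all_classical all_reals all_analysis.

Import Order.TTheory GRing.Theory Num.Theory.
Local Open Scope ring_scope.

Section H.
Variable R : realType.
Local Notation C := (R[i]).

Definition vf m (v : 'cV[C]_m) (i : nat) : C :=
  if insub i is Some k then v k 0 else 0.
Arguments vf {m}.

Lemma vfE {m} (v : 'cV[C]_m) (k : 'I_m) : vf v k = v k 0.
Proof. by rewrite /vf valK. Qed.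

Lemma vfE2 {m} (v : 'cV[C]_m) (k : 'I_m) (c : 'I_1) : v k c = vf v k.
Proof. by rewrite (ord1 c) vfE. Qed.

Lemma vf_out {m} (v : 'cV[C]_m) i : (m <= i)%N -> vf v i = 0.
Proof. by move=> h; rewrite /vf insubF // ltnNge h. Qed.

Lemma vf_inj {m} (u v : 'cV[C]_m) : vf u =1 vf v -> u = v.
Proof. by move=> h; apply/matrixP=> i j; rewrite (ord1 j) -!vfE h. Qed.

Lemma vf_cast {m m'} (e : m = m') (e' : 1%N = 1%N) (v : 'cV[C]_m) :
  vf (castmx (e, e') v) =1 vf v.
Proof. by case: m' / e; rewrite castmx_id. Qed.

Lemma conform_eq {m m' n n'} (B : 'M[C]_(m', n')) (A : 'M[C]_(m, n)) :
  m = m' -> n = n' -> exists e, conform_mx B A = castmx e A.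
Proof.
move=> em en; rewrite /conform_mx; case: eqP => // e1; case: eqP => // e2.
by exists (e1, e2).
Qed.

Lemma vf_conform {m m'} (B : 'cV[C]_m') (A : 'cV[C]_m) :
  m = m' -> vf (conform_mx B A) =1 vf A.
Proof.
move=> e; have [[e1 e2] ->] := conform_eq B A e erefl.
exact: vf_cast.
Qed.

Lemma vf_add {m} (u v : 'cV[C]_m) i : vf (u + v) i = vf u i + vf v i.
Proof. by rewrite /vf; case: insub => [k|]; rewrite ?mxE ?addr0. Qed.

Lemma vf_scale {m} a (v : 'cV[C]_m) i : vf (a *: v) i = a * vf v i.
Proof. by rewrite /vf; case: insub => [k|]; rewrite ?mxE ?mulr0. Qed.

Lemma vf0 m i : vf (0 : 'cV[C]_m) i = 0.
Proof. by rewrite /vf; case: insub => [k|]; rewrite ?mxE. Qed.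

Lemma vf_sum {m} (I : finType) (F : I -> 'cV[C]_m) i :
  vf (\sum_(x : I) F x) i = \sum_(x : I) vf (F x) i.
Proof.
elim/big_rec2: _ => [|x y v _ <-]; first exact: vf0.
exact: vf_add.
Qed.

Lemma vf_tens a b (u : 'cV[C]_a) (v : 'cV[C]_b) i :
  vf (u *t v) i = vf u (i %/ b) * vf v (i %% b).
Proof.
case: (ltnP i (a * b)) => hi.
  have hb : (0 < b)%N by case: b u v hi => //; rewrite muln0.
  rewrite (vfE _ (Ordinal hi)) mxE /=.
  by rewrite !vfE2.
rewrite vf_out //.
case: b u v hi => [|b] u v hi; first by rewrite modn0 (vf_out v) ?mulr0.
by rewrite (vf_out u) ?mul0r // leq_divRL.
Qed.

Lemma vf_qb b i : vf (qb R b) i = (i == b)%:R.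
Proof.
case: (ltnP i 2) => hi.
  by rewrite (vfE _ (Ordinal hi)) mxE.
rewrite vf_out //; case: b => /=; case: i hi => [|[|i]] //.
Qed.


Lemma vf_ket0s a i : vf (ket0s R a) i = (i == 0)%:R.
Proof.
elim: a i => [|a IH] i.
  case: (ltnP i 1) => hi.
    by rewrite (vfE _ (Ordinal hi)) mxE; case: i hi.
  by rewrite vf_out //; case: i hi.
rewrite /ket0s /=.
have -> : behead_tuple (nseq_tuple a.+1 false) = nseq_tuple a false by apply: val_inj.
rewrite vf_cast vf_tens vf_qb IH.
have -> : thead (nseq_tuple a.+1 false) = false by [].
rewrite -natrM mulnb; congr (_%:R); congr (nat_of_bool _).
apply/idP/eqP => [/andP[/eqP h1 /eqP h2]|->]; last by rewrite div0n mod0n.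
by rewrite (divn_eq i (2 ^ a)) h1 h2.
Qed.

Lemma beheadE m z (w : m.-tuple bool) : behead_tuple [tuple of z :: w] = w.
Proof. by apply: val_inj. Qed.

Lemma cast_trmul m m' c c' (e : m = m') (e1 : c = c') (X Y : 'M[C]_(m, c)) :
  (castmx (e, e1) X)^T *m castmx (e, e1) Y = castmx (e1, e1) (X^T *m Y).
Proof. by case: m' / e; case: c' / e1; rewrite !castmx_id. Qed.

Lemma castmx_mulmx m m' c c' p (e : m = m') (e1 : c = c') (X : 'M[C]_(m, p)) (Y : 'M[C]_(p, c)) :
  castmx (e, e1) (X *m Y) = castmx (e, erefl) X *m castmx (erefl, e1) Y.
Proof. by case: m' / e; case: c' / e1; rewrite !castmx_id. Qed.

Lemma castmx_mul2 m m' c c' p p' (e : m = m') (e1 : c = c') (e2 e3 : p = p') (X : 'M[C]_(m, p)) (Y : 'M[C]_(p, c)) :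
  castmx (e, e2) X *m castmx (e3, e1) Y = castmx (e, e1) (X *m Y).
Proof. by rewrite (eq_irrelevance e3 e2); clear e3; case: m' / e; case: c' / e1; case: p' / e2; rewrite !castmx_id. Qed.

Lemma eq_I1 (i j : 'I_1) : (i == j) = true.
Proof. by rewrite !ord1. Qed.

Lemma qb_orth z z' : (qb R z)^T *m qb R z' = (z == z')%:R%:M.
Proof.
apply/matrixP => i k; rewrite !ord1 !mxE !big_ord_recl big_ord0 !mxE /=.
by case: z; case: z'; rewrite /bump /= ?mulr0 ?mulr1 ?addr0 ?add0r ?mulr1n ?mul0r ?mulr0n.
Qed.

Lemma ket_orth j (w w' : j.-tuple bool) : (ket R w)^T *m ket R w' = (w == w')%:R%:M.
Proof.
elim: j w w' => [|j IH] w w'.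
  rewrite (tuple0 w) (tuple0 w') eqxx.
  by apply/matrixP => i k; rewrite !ord1 !mxE big_ord1 !mxE mulr1.
case/tupleP: w => z w; case/tupleP: w' => z' w' /=.
rewrite !theadE !beheadE cast_trmul trmx_tens tensmx_mul qb_orth IH.
apply/matrixP => i k; rewrite castmxE !mxE !eq_I1 /=.
have -> : ([tuple of z :: w] == [tuple of z' :: w']) = (z == z') && (w == w').
  by rewrite -[LHS]val_eqE /= eqseq_cons val_eqE.
by case: (z == z'); case: (w == w'); rewrite /= ?mulr1n ?mulr0n ?mulr1 ?mulr0.
Qed.


Local Notation ecast m := (castmx (esym (expnS 2 m), muln1 1)).

Lemma proj_ket m (w w' : m.-tuple bool) :
  Defs.proj R w *m ket R w' = (w == w')%:R *: ket R w.
Proof. by rewrite /proj -mulmxA ket_orth mul_mx_scalar. Qed.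

Lemma CC_act m (w w' : m.-tuple bool) (U : 'M[C]_2) (v : 'cV[C]_2) :
  CC w U *m ecast m (v *t ket R w') =
  ecast m ((if w == w' then U *m v else v) *t ket R w').
Proof.
rewrite /CC castmx_mul2 mulmxDl !tensmx_mul proj_ket mulmxBl mul1mx proj_ket mul1mx.
case: eqP => [<-|_]; first by rewrite scale1r subrr tensmx0 addr0.
by rewrite scale0r subr0 tensmx0 add0r.
Qed.

Lemma prod_act m (s : seq (m.-tuple bool)) (F : m.-tuple bool -> 'M[C]_2)
   (v : 'cV[C]_2) w' : uniq s ->
  (\prod_(w <- s) CC w (F w)) *m ecast m (v *t ket R w') =
  ecast m ((if w' \in s then F w' *m v else v) *t ket R w').
Proof.
elim: s => [|a s IH] /=; first by rewrite big_nil mul1mx.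
move=> /andP[nas us]; rewrite big_cons -mulmxE -mulmxA IH // CC_act in_cons.
by case: (eqVneq a w') => [<-|ne]; rewrite ?(negbTE nas).
Qed.

Lemma tens11 a b : (1%:M : 'M[C]_a) *t (1%:M : 'M[C]_b) = 1%:M.
Proof.
apply/matrixP => i j.
case: (mxtens_indexP i) => i1 i2; case: (mxtens_indexP j) => j1 j2.
rewrite tensmxE !mxE (inj_eq (can_inj (@mxtens_indexK _ _))) xpair_eqE.
by rewrite -natrM mulnb.
Qed.

Lemma castmx1 m m' (e : m = m') : castmx (e, e) (1%:M : 'M[C]_m) = 1%:M.
Proof. by case: m' / e; rewrite castmx_id. Qed.

Lemma ek {n k} : (k <= n)%N -> (2 ^ (n - k) * 2 ^ k = 2 ^ n)%N.
Proof. by move=> h; rewrite -expnD subnK. Qed.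

Lemma embedE {n k} (h : (k <= n)%N) (A : 'M[C]_(2 ^ k)) :
  embed n k A = castmx (ek h, ek h) (1%:M *t A).
Proof.
rewrite /embed; have [e ->] := conform_eq (1%:M : 'M[C]_(2 ^ n)) ((1%:M : 'M[C]_(2 ^ (n - k))) *t A) (ek h) (ek h).
exact: eq_castmx.
Qed.

Lemma embedM n k (h : (k <= n)%N) (A B : 'M[C]_(2 ^ k)) :
  embed n k A *m embed n k B = embed n k (A *m B).
Proof. by rewrite !(embedE h) castmx_mul2 tensmx_mul mul1mx. Qed.

Lemma embed1 n k (h : (k <= n)%N) : embed n k (1%:M : 'M[C]_(2 ^ k)) = 1%:M.
Proof. by rewrite (embedE h) tens11 castmx1. Qed.

Lemma step_embed n k (h : (k <= n)%N) (A : 'M[C]_(2 ^ k)) (u : 'cV[C]_(2 ^ k)) :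
  embed n k A *m conform_mx (0 : 'cV[C]_(2 ^ n)) (ket0s R (n - k) *t u) =
  conform_mx (0 : 'cV[C]_(2 ^ n)) (ket0s R (n - k) *t (A *m u)).
Proof.
rewrite (embedE h).
have [e ->] := conform_eq (0 : 'cV[C]_(2 ^ n)) (ket0s R (n - k) *t u) (ek h) (muln1 1).
have [e' ->] := conform_eq (0 : 'cV[C]_(2 ^ n)) (ket0s R (n - k) *t (A *m u)) (ek h) (muln1 1).
case: e e' => [e1 e2] [e1' e2'].
rewrite castmx_mul2 tensmx_mul mul1mx; exact: eq_castmx.
Qed.


Lemma divn_ne0 {i d} : (0 < d)%N -> (d <= i)%N -> (i %/ d == 0)%N = false.
Proof. by move=> d0 h; apply/negbTE; rewrite -lt0n divn_gt0. Qed.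

Lemma tensmx_sumr m n p q (A : 'M[C]_(m, n)) (I : Type) (r : seq I) (P : pred I) (F : I -> 'M[C]_(p, q)) :
  A *t (\sum_(i <- r | P i) F i) = \sum_(i <- r | P i) A *t F i.
Proof.
apply/matrixP => a b; rewrite !mxE summxE mulr_sumr summxE.
by apply: eq_bigr => x _; rewrite !mxE.
Qed.

Lemma tensmx_suml m n p q (B : 'M[C]_(p, q)) (I : Type) (r : seq I) (P : pred I) (F : I -> 'M[C]_(m, n)) :
  (\sum_(i <- r | P i) F i) *t B = \sum_(i <- r | P i) F i *t B.
Proof.
apply/matrixP => a b; rewrite !mxE summxE mulr_suml summxE.
by apply: eq_bigr => x _; rewrite !mxE.
Qed.

Lemma tensmx_scaler m n p q (A : 'M[C]_(m, n)) c (B : 'M[C]_(p, q)) :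
  A *t (c *: B) = c *: (A *t B).
Proof. by apply/matrixP => a b; rewrite !mxE mulrCA. Qed.

Lemma tensmx_scalel m n p q (A : 'M[C]_(m, n)) c (B : 'M[C]_(p, q)) :
  (c *: A) *t B = c *: (A *t B).
Proof. by apply/matrixP => a b; rewrite !mxE mulrA. Qed.

Lemma castmx_sum m n m' n' (e : (m = m') * (n = n')) (I : Type) (r : seq I) (P : pred I) (F : I -> 'M[C]_(m, n)) :
  castmx e (\sum_(i <- r | P i) F i) = \sum_(i <- r | P i) castmx e (F i).
Proof.
apply/matrixP => a b; rewrite castmxE !summxE.
by apply: eq_bigr => x _; rewrite castmxE.
Qed.

Lemma castmx_scale m n m' n' (e : (m = m') * (n = n')) c (A : 'M[C]_(m, n)) :
  castmx e (c *: A) = c *: castmx e A.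
Proof. by apply/matrixP => a b; rewrite castmxE !mxE castmxE. Qed.

Lemma Rot_qb0 a : Rot a *m qb R false = \sum_(z : bool) (Tz z a)%:C%C *: qb R z.
Proof.
apply/matrixP => i k; rewrite (ord1 k) !mxE summxE big_bool !mxE /=.
rewrite !big_ord_recl big_ord0 !mxE /= /Tz /=.
case: i => [[|[|]]] //= _; rewrite ?expr0 ?expr1 ?mulr1 ?mul1r ?mulr0 ?addr0 ?add0r ?mulr1n ?mulr0n //.
Qed.


Definition phi (rho : R -> R) j : 'cV[C]_(2 ^ j) :=
  \sum_(w : j.-tuple bool) amp rho w *: ket R w.

Lemma amp_cons (rho : R -> R) m z (w : m.-tuple bool) :
  amp rho [tuple of z :: w] = (Tz z (theta rho w))%:C%C * amp rho w.
Proof.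
rewrite /amp big_ord_recl tnth0 /= drop0; congr (_ * _).
by apply: eq_bigr => i _; rewrite tnthS.
Qed.

Lemma sum_tuple_cons m k (F : m.+1.-tuple bool -> 'cV[C]_k) :
  \sum_(w : m.+1.-tuple bool) F w =
  \sum_(z : bool) \sum_(w : m.-tuple bool) F [tuple of z :: w].
Proof.
rewrite pair_big /=.
apply: (reindex (fun p : bool * m.-tuple bool => [tuple of p.1 :: p.2])).
exists (fun w => (thead w, behead_tuple w)) => [[z w] _ | w _] /=.
  by rewrite theadE beheadE.
by case/tupleP: w => z w; apply: val_inj.
Qed.

Lemma ket_cons m z (w : m.-tuple bool) :
  ket R [tuple of z :: w] = ecast m (qb R z *t ket R w).
Proof. by rewrite /= theadE beheadE. Qed.

Lemma phi_step rho j (G : 'M[C]_(2 ^ j.+1))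
  (hG : forall w : j.-tuple bool, G *m ecast j (qb R false *t ket R w) =
         ecast j ((Rot (theta rho w) *m qb R false) *t ket R w)) :
  G *m ecast j (qb R false *t phi rho j) = phi rho j.+1.
Proof.
rewrite /phi tensmx_sumr castmx_sum mulmx_sumr sum_tuple_cons exchange_big /=.
apply: eq_bigr => w _.
rewrite tensmx_scaler castmx_scale -scalemxAr hG Rot_qb0 tensmx_suml castmx_sum scaler_sumr.
apply: eq_bigr => z _.
rewrite amp_cons tensmx_scalel castmx_scale scalerA mulrC.
by rewrite theadE beheadE.
Qed.


Definition Gmat (rho : R -> R) (j : nat) : 'M[C]_(2 ^ j.+1) :=
  match j return 'M[C]_(2 ^ j.+1) with
  | 0 => Rot (theta rho [::])
  | m.+1 => \prod_(w : m.+1.-tuple bool) CC w (Rot (theta rho w))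
  end.

Lemma Gmat_act rho j (w : j.-tuple bool) :
  Gmat rho j *m ecast j (qb R false *t ket R w) =
  ecast j ((Rot (theta rho w) *m qb R false) *t ket R w).
Proof.
case: j w => [|m] w /=.
  rewrite (tuple0 w).
  have E : forall x : 'cV[C]_2, ecast 0 (x *t ket R [tuple]) = x.
    move=> x; apply: vf_inj => i; rewrite vf_cast vf_tens divn1 modn1.
    by rewrite (vfE _ (@ord0 0)) mxE mulr1.
  by rewrite !E.
by rewrite (prod_act _ _ (fun w0 => Rot (theta rho w0))) ?index_enum_uniq // mem_index_enum.
Qed.

Lemma UgateE rho n j : (j.+1 <= n)%N -> Ugate rho n j.+1 = embed n j.+1 (Gmat rho j).
Proof.
case: j => [|m] h //=.
by rewrite (big_morph (embed n m.+2) (fun A B => esym (embedM _ _ h A B)) (embed1 _ _ h)).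
Qed.

Lemma reshape n j (h : (j < n)%N) (u : 'cV[C]_(2 ^ j)) :
  conform_mx (0 : 'cV[C]_(2 ^ n)) (ket0s R (n - j) *t u) =
  conform_mx (0 : 'cV[C]_(2 ^ n)) (ket0s R (n - j.+1) *t ecast j (qb R false *t u)).
Proof.
apply: vf_inj => i.
rewrite (vf_conform _ _ (ek (ltnW h))) (vf_conform _ _ (ek h)).
rewrite !vf_tens !vf_ket0s vf_cast vf_tens vf_qb.
have p0 : (0 < 2 ^ j)%N by rewrite expn_gt0.
have p1 : (0 < 2 ^ j.+1)%N by rewrite expn_gt0.
case: (ltnP i (2 ^ j)) => hi.
  have h2 : (i < 2 ^ j.+1)%N by rewrite expnS mul2n -addnn ltn_addr.
  by rewrite !divn_small ?modn_small //= !mul1r.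
rewrite (divn_ne0 p0 hi) mul0r.
case: (ltnP i (2 ^ j.+1)) => h2.
  rewrite (modn_small h2) (divn_ne0 p0 hi) /=.
  by rewrite mul0r mulr0.
by rewrite (divn_ne0 p1 h2) !mul0r.
Qed.

Lemma psiE rho n j : (j <= n)%N ->
  psi rho n j = conform_mx (0 : 'cV[C]_(2 ^ n)) (ket0s R (n - j) *t phi rho j).
Proof.
elim: j => [_|j IH h].
  apply: vf_inj => i; rewrite (vf_conform _ _ (ek (leq0n n))) vf_tens /=.
  rewrite /phi (big_pred1 [tuple]) => [|w]; last by apply/esym/eqP; exact: tuple0.
  rewrite /amp big_ord0 scale1r !vf_ket0s divn1 modn1.
  by rewrite eqxx mulr1.
have -> : psi rho n j.+1 = Ugate rho n j.+1 *m psi rho n j by [].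
rewrite (IH (ltnW h)) (reshape _ _ h) (UgateE _ _ _ h) (step_embed _ _ h).
by rewrite phi_step //; apply: Gmat_act.
Qed.

End H.

Theorem lemma3p2 (R : realType) (n : nat) (rho : R -> R)
  (hn : (1 <= n)%N)
  (hrho0 : forall x : R, 0 <= x <= 1 -> 0 <= rho x)
  (hint : (@lebesgue_measure R).-integrable `[0, 1]%classic (EFin \o rho))
  (hone : (\int[@lebesgue_measure R]_(x in `[0%R, 1%R]%classic) (rho x)%:E = 1)%E) :
  (forall j : nat, (1 <= j <= n)%N ->
     psi rho n j =
     conform_mx 0
       (ket0s R (n - j) *t \sum_(w : j.-tuple bool) amp rho w *: ket R w))
  /\ psi rho n n = \sum_(w : n.-tuple bool) amp rho w *: ket R w.
Proof.
split; first by move=> j /andP[_ hj]; exact: psiE.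
rewrite (@psiE R rho n n (leqnn n)); apply: vf_inj => i.
rewrite (vf_conform _ _ _ (ek (leqnn n))) vf_tens vf_ket0s.
have p0 : (0 < 2 ^ n)%N by rewrite expn_gt0.
case: (ltnP i (2 ^ n)) => hi; first by rewrite divn_small ?modn_small //= mul1r.
by rewrite (divn_ne0 p0 hi) mul0r (vf_out _ _ _ hi).
Qed.
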